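(* Let $\mathbf{A}\in\mathbb{R}^{r\times n}$ be a matrix whose nonzero entries are bounded in absolute value by $\mathrm{poly}(r)$ and all of whose subdeterminants are either zero or at least $\frac{1}{\mathrm{poly}(r)}$ in absolute value. Let $s\ge1$. Then there is a matrix $\mathbf{A}'\in\mathbb{R}^{r\times n}$, obtained from $\mathbf{A}$ by zeroing out at most $O(r^2s\log(nr))$ columns, such that every column of $\mathbf{A}'$ has leverage score at most $\frac1s$.
   Context: The leverage score of column $\mathbf{a}_i$ of a matrix $\mathbf{M}$ is $\ell_i=\max_{\mathbf{v}:\mathbf{M}^\top\mathbf{v}\neq0}\frac{\langle\mathbf{v},\mathbf{a}_i\rangle^2}{\|\mathbf{M}^\top\mathbf{v}\|_2^2}$ (equivalently $\mathbf{a}_i^\top(\mathbf{M}\mathbf{M}^\top)^{+}\mathbf{a}_i$). *)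

(* Defs.v *)
From HB Require Import structures.
From mathcomp Require Import all_boot all_order all_algebra.
From mathcomp Require Import classical_sets reals exp.
Set Implicit Arguments. Unset Strict Implicit. Unset Printing Implicit Defensive.
Import Order.TTheory GRing.Theory Num.Theory.
Local Open Scope ring_scope.

(* Leverage score of column i of M (paper's definition):
   l_i = max_{v : M^T v <> 0} <v, a_i>^2 / ||M^T v||_2^2,
   rendered as the supremum of that set of ratios (the max is attained). *)
Definition leverage_score (R : realType) (r n : nat) (M : 'M[R]_(r, n))
    (i : 'I_n) : R :=
  reals.sup [set x : R | exists v : 'cV[R]_r,
      M^T *m v != 0 /\
      x = ((v^T *m col i M) 0 0) ^+ 2 / (((M^T *m v)^T *m (M^T *m v)) 0 0)]%classic.

Definition zero_cols (R : realType) (r n : nat) (A : 'M[R]_(r, n))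
    (S : {set 'I_n}) : 'M[R]_(r, n) :=
  \matrix_(i, j) (if j \in S then 0 else A i j).

Definition subdet (R : realType) (r n k : nat) (A : 'M[R]_(r, n))
    (f : 'I_k -> 'I_r) (g : 'I_k -> 'I_n) : R :=
  \det (mxsub f g A).

(* Main.v *)
Require Import Defs.
From HB Require Import structures.
From mathcomp Require Import all_boot all_order all_algebra.
From mathcomp Require Import classical_sets reals exp boolp.
From mathcomp Require Import ring lra zify.
From mathcomp Require Import fingroup perm.
Set Implicit Arguments. Unset Strict Implicit. Unset Printing Implicit Defensive.
Import Order.TTheory GRing.Theory Num.Theory.
Local Open Scope ring_scope.

Lemma det1_add_mul (R : comNzRingType) k (u v : 'cV[R]_k) :
  \det (1%:M + u *m v^T) = 1 + (v^T *m u) 0 0.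
Proof.
have E1 : block_mx (1%:M + u *m v^T) u 0 1%:M *m block_mx 1%:M 0 (- v^T) 1%:M
        = block_mx 1%:M u (- v^T) (1%:M : 'M_1).
  rewrite mulmx_block ?mulmx1 ?mul1mx ?mulmx0 ?mul0mx ?add0r ?addr0.
  by rewrite mulmxN addrK.
have E2 : block_mx 1%:M 0 (- v^T) 1%:M *m block_mx 1%:M u 0 (1%:M + v^T *m u)
        = block_mx 1%:M u (- v^T) (1%:M : 'M_1).
  rewrite mulmx_block ?mulmx1 ?mul1mx ?mulmx0 ?mul0mx ?add0r ?addr0.
  by rewrite mulNmx addrCA addNr addr0.
have := congr1 determinant (etrans E1 (esym E2)).
rewrite !det_mulmx det_ublock det_lblock det_ublock !det1 !mulr1 !mul1r.
by move->; rewrite det_mx11 !mxE eqxx mulr1n.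
Qed.

Lemma det_rank1 (R : fieldType) k (G : 'M[R]_k) (c d : 'cV[R]_k) :
  G \in unitmx ->
  \det (G + c *m d^T) = \det G * (1 + (d^T *m invmx G *m c) 0 0).
Proof.
move=> uG.
have -> : G + c *m d^T = G *m (1%:M + (invmx G *m c) *m d^T).
  by rewrite mulmxDr mulmx1 !mulmxA mulmxV // mul1mx.
by rewrite det_mulmx det1_add_mul mulmxA.
Qed.

Lemma dotE (R : comNzRingType) n (p q : 'cV[R]_n) :
  (p^T *m q) 0 0 = \sum_i p i 0 * q i 0.
Proof. by rewrite mxE; apply: eq_bigr => i _; rewrite mxE. Qed.

Lemma sqn_ge0 (R : realFieldType) n (p : 'cV[R]_n) : 0 <= (p^T *m p) 0 0.
Proof. by rewrite dotE sumr_ge0 // => i _; rewrite -expr2 sqr_ge0. Qed.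

Lemma sqn_eq0 (R : realFieldType) n (p : 'cV[R]_n) : (p^T *m p) 0 0 = 0 -> p = 0.
Proof.
rewrite dotE => /eqP; rewrite psumr_eq0 => [/allP H|i _]; last by rewrite -expr2 sqr_ge0.
apply/matrixP => i j; rewrite (ord1 j) mxE.
by have /implyP/(_ isT) := H i (mem_index_enum i); rewrite mulf_eq0 orbb => /eqP.
Qed.

Lemma CS_sum (R : realFieldType) n (x y : 'I_n -> R) :
  (\sum_i x i * y i) ^+ 2 <= (\sum_i x i * x i) * (\sum_i y i * y i).
Proof.
move Ha : (\sum_i x i * x i) => a; move Hb : (\sum_i x i * y i) => b.
move Hc : (\sum_i y i * y i) => c.
have c0 : 0 <= c by rewrite -Hc sumr_ge0 // => i _; rewrite -expr2 sqr_ge0.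
have [cz|cnz] := eqVneq c 0.
  have y0 : forall i, y i = 0.
    move=> i; move: cz; rewrite -Hc => /eqP; rewrite psumr_eq0 => [/allP H|j _]; last by rewrite -expr2 sqr_ge0.
    by have /implyP/(_ isT) := H i (mem_index_enum i); rewrite mulf_eq0 orbb => /eqP.
  rewrite -Hb big1 ?expr0n ?cz ?mulr0 // => i _; by rewrite y0 mulr0.
have cp : 0 < c by rewrite lt_def cnz c0.
have H : 0 <= \sum_i (c * x i - b * y i) ^+ 2 by apply: sumr_ge0 => i _; apply: sqr_ge0.
have E : \sum_i (c * x i - b * y i) ^+ 2 = c * (c * a - b ^+ 2).
  rewrite (eq_bigr (fun i => c ^+ 2 * (x i * x i) + (- (2 * c * b)) * (x i * y i) + b ^+ 2 * (y i * y i))); last by move=> i _; ring.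
  rewrite !big_split /= -!mulr_sumr Ha Hb Hc; ring.
rewrite E in H.
have : 0 <= c * a - b ^+ 2 by rewrite -(pmulr_rge0 _ cp).
by rewrite subr_ge0 mulrC.
Qed.

Lemma CS (R : realFieldType) n (p q : 'cV[R]_n) :
  ((p^T *m q) 0 0) ^+ 2 <= (p^T *m p) 0 0 * (q^T *m q) 0 0.
Proof. by rewrite !dotE; apply: CS_sum. Qed.

Definition psd (R : realFieldType) k (H : 'M[R]_k) :=
  forall x : 'cV_k, 0 <= (x^T *m H *m x) 0 0.

Lemma gram_qf (R : realFieldType) k n (B : 'M[R]_(k, n)) (x : 'cV_k) :
  (x^T *m (B *m B^T) *m x) = (B^T *m x)^T *m (B^T *m x).
Proof. by rewrite trmx_mul trmxK !mulmxA. Qed.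

Lemma gram_psd (R : realFieldType) k n (B : 'M[R]_(k, n)) : psd (B *m B^T).
Proof. by move=> x; rewrite gram_qf sqn_ge0. Qed.

Lemma gram_sym (R : realFieldType) k n (B : 'M[R]_(k, n)) : (B *m B^T)^T = B *m B^T.
Proof. by rewrite trmx_mul trmxK. Qed.

Lemma det_pos_unit (R : realFieldType) k (H : 'M[R]_k) : 0 < \det H -> H \in unitmx.
Proof. by move=> h; rewrite unitmxE unitfE gt_eqF. Qed.

Lemma add_rank1 (R : realFieldType) k (H : 'M[R]_k) (c : 'cV_k) :
  H^T = H -> psd H -> 0 < \det H ->
  [/\ \det H <= \det (H + c *m c^T), (H + c *m c^T)^T = H + c *m c^T &
      psd (H + c *m c^T)].
Proof.
move=> sH pH dH; have uH := det_pos_unit dH.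
split.
- rewrite det_rank1 // ler_pMr // lerDl.
  have := pH (invmx H *m c).
  rewrite trmx_mul trmx_inv sH -!mulmxA (mulmxA H) mulmxV // mul1mx.
  by rewrite !mulmxA.
- by rewrite linearD /= sH trmx_mul trmxK.
- move=> x; rewrite mulmxDr mulmxDl mxE addr_ge0 //.
  have -> : x^T *m (c *m c^T) *m x = (c^T *m x)^T *m (c^T *m x).
    by rewrite trmx_mul trmxK !mulmxA.
  exact: sqn_ge0.
Qed.

Lemma add_rank1_seq (R : realFieldType) k n (c : 'I_n -> 'cV[R]_k) (P : pred 'I_n)
   (s : seq 'I_n) (H : 'M[R]_k) :
  H^T = H -> psd H -> 0 < \det H ->
  \det H <= \det (H + \sum_(j <- s | P j) c j *m (c j)^T).
Proof.
elim: s H => [|x s IH] H sH pH dH; first by rewrite big_nil addr0.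
rewrite big_cons; case: (P x); last exact: IH.
have [h1 h2 h3] := add_rank1 (c x) sH pH dH.
rewrite addrA; apply: (le_trans h1); apply: IH => //; exact: (lt_le_trans dH h1).
Qed.

Lemma gram_sum (R : realFieldType) k n (B : 'M[R]_(k, n)) :
  B *m B^T = \sum_j col j B *m (col j B)^T.
Proof.
apply/matrixP => a b; rewrite !mxE summxE; apply: eq_bigr => j _.
by rewrite !mxE big_ord1 !mxE.
Qed.

Lemma gram_lb (R : realFieldType) k n (B : 'M[R]_(k, n)) (J : 'I_k -> 'I_n) :
  injective J -> \det (colsub J B) != 0 ->
  \det (colsub J B) ^+ 2 <= \det (B *m B^T).
Proof.
move=> iJ dJ.
pose T := [set J i | i in 'I_k].
pose F := fun j => col j B *m (col j B)^T.
have E : B *m B^T = colsub J B *m (colsub J B)^T + \sum_(j | j \notin T) F j.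
  rewrite gram_sum (bigID (fun j => j \in T)) /=; congr (_ + _).
  rewrite big_imset /=; last by move=> x y _ _; apply: iJ.
  by rewrite gram_sum; apply: eq_bigr => i _; rewrite col_colsub.
have dpos : 0 < \det (colsub J B *m (colsub J B)^T).
  by rewrite det_mulmx det_tr -expr2 exprn_even_gt0.
rewrite E; have -> : \det (colsub J B) ^+ 2 = \det (colsub J B *m (colsub J B)^T).
  by rewrite det_mulmx det_tr expr2.
by apply: add_rank1_seq => //; [exact: gram_sym | exact: gram_psd].
Qed.

Lemma det_ub (R : realFieldType) k (X : 'M[R]_k) (m : R) :
  (forall a b, `|X a b| <= m) -> `|\det X| <= (k`!)%:R * m ^+ k.
Proof.
move=> hX; rewrite /determinant.
apply: (le_trans (ler_norm_sum _ _ _)).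
have -> : (k`!)%:R * m ^+ k = \sum_(s : 'S_k) m ^+ k.
  by rewrite sumr_const card_Sn mulr_natl.
apply: ler_sum => s _; rewrite normrM normrX normrN1 expr1n mul1r.
rewrite normr_prod; have -> : m ^+ k = \prod_(i < k) m by rewrite prodr_const card_ord.
by apply: ler_prod => i _; rewrite normr_ge0 hX.
Qed.

Lemma lev_le (R : realType) r n (M : 'M[R]_(r, n)) (j : 'I_n) (b : R) :
  0 <= b ->
  (forall v : 'cV_r, M^T *m v != 0 ->
     ((v^T *m col j M) 0 0) ^+ 2 / (((M^T *m v)^T *m (M^T *m v)) 0 0) <= b) ->
  leverage_score M j <= b.
Proof.
move=> b0 H; rewrite /leverage_score.
set E := [set x | _]%classic.
have [[x Ex]|nE] := pselect (E !=set0)%classic.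
  apply: ge_sup; first by exists x.
  by move=> y [v [hv ->]]; apply: H.
have -> : E = set0%classic.
  by apply/seteqP; split => // y Ey; apply: nE; exists y.
by rewrite sup0.
Qed.

Definition Zc (R : realType) n (j : 'I_n) : 'M[R]_n := 1%:M - delta_mx j j.

Lemma zero_colsU (R : realType) r n (A : 'M[R]_(r, n)) S j :
  zero_cols A (j |: S) = zero_cols A S *m Zc R j.
Proof.
apply/matrixP => a b; rewrite !mxE.
rewrite (bigD1 b) //= big1 => [|c cb]; last first.
  rewrite /Zc !mxE (negbTE cb) sub0r.
  case: (eqVneq c j) => [cj|cj]; case: (eqVneq b j) => [bj|bj] //=; try by rewrite oppr0 mulr0.
  by move: cb; rewrite cj bj eqxx.
rewrite /Zc !mxE eqxx in_setU1 addr0.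
case: (eqVneq b j) => [->|bj] /=.
  by rewrite subrr mulr0.
by rewrite subr0 mulr1.
Qed.

Lemma Zc_sq (R : realType) n (j : 'I_n) : Zc R j *m (Zc R j)^T = Zc R j.
Proof.
rewrite /Zc linearB /= trmx1 trmx_delta mulmxBl mul1mx mulmxBr mulmx1 mul_delta_mx.
by rewrite subrr subr0.
Qed.

Lemma gram_Zc (R : realType) k n (B : 'M[R]_(k, n)) (j : 'I_n) :
  (B *m Zc R j) *m (B *m Zc R j)^T = B *m B^T + (- col j B) *m (col j B)^T.
Proof.
rewrite trmx_mul -mulmxA (mulmxA (Zc R j)) Zc_sq /Zc mulmxBl mul1mx mulmxBr.
rewrite colE trmx_mul trmx_delta -(mul_delta_mx (0 : 'I_1)).
by rewrite mulNmx !mulmxA.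
Qed.

Lemma rank_gram_unit (R : realType) k n (B : 'M[R]_(k, n)) :
  0 < \det (B *m B^T) -> \rank B = k.
Proof.
move=> h; apply/eqP; rewrite eqn_leq rank_leq_row /=.
have := mxrankM_maxl B B^T; by rewrite (mxrank_unit (det_pos_unit h)).
Qed.

Lemma step (R : realType) r n (A : 'M[R]_(r, n)) S k (I : 'I_k -> 'I_r)
    (j : 'I_n) (v : 'cV_r) (s : R) :
  (\rank (zero_cols A S) <= k)%N ->
  0 < \det (rowsub I (zero_cols A S) *m (rowsub I (zero_cols A S))^T) ->
  0 < s ->
  1 / s < ((v^T *m col j (zero_cols A S)) 0 0) ^+ 2 /
          ((((zero_cols A S)^T *m v)^T *m ((zero_cols A S)^T *m v)) 0 0) ->
  \det (rowsub I (zero_cols A (j |: S)) *m (rowsub I (zero_cols A (j |: S)))^T)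
   <= \det (rowsub I (zero_cols A S) *m (rowsub I (zero_cols A S))^T) * (1 - 1 / s).
Proof.
set M := zero_cols A S; set B := rowsub I M; set G := B *m B^T.
move=> hr dG s0 hv.
have uG := det_pos_unit dG.
have rB := rank_gram_unit dG.
have sBM : (B <= M)%MS by rewrite /B rowsubE submxMl.
have sMB : (M <= B)%MS.
  rewrite -(mxrank_leqif_sup sBM).2 rB eqn_leq hr andbT.
  by rewrite -{1}rB mxrankS.
have /submxP [D hD] : (v^T *m M <= B)%MS by apply: submx_trans (submxMl _ _) sMB.
set w := D^T.
set a := col j B.
set y := invmx G *m a.
set p := B^T *m w; set q := B^T *m y.
have hp : M^T *m v = p by rewrite /p /w -[v]trmxK -trmx_mul hD trmx_mul.
have hpq : (v^T *m col j M) = p^T *m q.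
  rewrite colE mulmxA hD /p /q /y /w trmx_mul trmxK -!mulmxA; congr (D *m _).
  by rewrite trmxK !mulmxA -/G mulmxV // mul1mx /a colE.
have hqq : (q^T *m q) 0 0 = (a^T *m invmx G *m a) 0 0.
  rewrite /q /y -gram_qf -/G trmx_mul trmx_inv gram_sym.
  by rewrite -/G -mulmxA (mulmxA G) mulmxV // mul1mx.
have hB' : rowsub I (zero_cols A (j |: S)) = B *m Zc R j.
  by rewrite zero_colsU /B -mul_rowsub_mx.
rewrite hB' gram_Zc det_rank1 // -/G.
have -> : (a^T *m invmx G *m - a) 0 0 = - (a^T *m invmx G *m a) 0 0.
  by rewrite mulmxN mxE.
rewrite -hqq ler_pM2l // lerD2l lerN2.
rewrite hp hpq in hv.
move: hv; set pq := (p^T *m q) 0 0; set pp := (p^T *m p) 0 0; set qq := (q^T *m q) 0 0.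
move=> hv.
have pp0 : 0 <= pp by apply: sqn_ge0.
have [ppz|ppnz] := eqVneq pp 0.
  by move: hv; rewrite ppz invr0 mulr0 ltNge divr_ge0 // ltW.
have ppp : 0 < pp by rewrite lt_def ppnz pp0.
have hcs : pq ^+ 2 <= pp * qq by apply: CS.
rewrite ltr_pdivlMr // in hv.
apply/ltW; rewrite -(ltr_pM2l ppp) mulrC; apply: lt_le_trans hcs.
by move: hv; rewrite mulrC.
Qed.

Lemma M_sub_B (R : realType) r n (M : 'M[R]_(r, n)) k (I : 'I_k -> 'I_r) :
  (\rank M <= k)%N -> 0 < \det (rowsub I M *m (rowsub I M)^T) ->
  (M <= rowsub I M)%MS.
Proof.
move=> hr dG; have rB := rank_gram_unit dG.
have sBM : (rowsub I M <= M)%MS by rewrite rowsubE submxMl.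
rewrite -(mxrank_leqif_sup sBM).2 rB eqn_leq hr andbT.
by rewrite -{1}rB mxrankS.
Qed.

Lemma drop (R : realType) r n (A : 'M[R]_(r, n)) S k (I : 'I_k -> 'I_r) (j : 'I_n) :
  (\rank (zero_cols A S) <= k)%N ->
  0 < \det (rowsub I (zero_cols A S) *m (rowsub I (zero_cols A S))^T) ->
  ~~ row_free (rowsub I (zero_cols A (j |: S))) ->
  (\rank (zero_cols A (j |: S)) < k)%N.
Proof.
move=> hr dG nf.
have /submxP [X hX] := M_sub_B hr dG.
have hB' : rowsub I (zero_cols A (j |: S)) = rowsub I (zero_cols A S) *m Zc R j.
  by rewrite zero_colsU -mul_rowsub_mx.
have -> : zero_cols A (j |: S) = X *m rowsub I (zero_cols A (j |: S)).
  by rewrite hB' mulmxA -hX zero_colsU.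
apply: leq_ltn_trans (mxrankM_maxr _ _) _.
by rewrite ltn_neqAle nf rank_leq_row.
Qed.

Lemma rank_zc (R : realType) r n (A : 'M[R]_(r, n)) S (j : 'I_n) :
  (\rank (zero_cols A (j |: S)) <= \rank (zero_cols A S))%N.
Proof. by rewrite zero_colsU mxrankM_maxl. Qed.

Lemma LB (R : realType) r n (A : 'M[R]_(r, n)) (P : R) S k (I : 'I_k -> 'I_r) :
  0 < P ->
  (forall (k : nat) (f : 'I_k -> 'I_r) (g : 'I_k -> 'I_n),
        subdet A f g = 0 \/ 1 / P <= `|subdet A f g|) ->
  row_free (rowsub I (zero_cols A S)) ->
  1 / P ^+ 2 <= \det (rowsub I (zero_cols A S) *m (rowsub I (zero_cols A S))^T).
Proof.
move=> P0 hdet rf.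
set B := rowsub I (zero_cols A S).
have hfull : row_full B^T by rewrite /row_full mxrank_tr.
set J := fullrankfun hfull.
have uJ := fullrowsub_unit hfull.
have iJ : injective J := @fullrankfun_inj _ _ _ _ hfull.
have hT : (colsub J B)^T = rowsub J B^T by rewrite trmx_mxsub.
have dJ : \det (colsub J B) != 0.
  by rewrite -det_tr hT; move: uJ; rewrite unitmxE unitfE -/J.
have hS : forall i, J i \notin S.
  move=> i; apply/negP => hi; move/eqP: dJ; apply.
  rewrite (expand_det_col _ i) big1 // => a _.
  by rewrite !mxE hi mul0r.
have hE : colsub J B = mxsub I J A.
  by apply/matrixP => a b; rewrite !mxE (negbTE (hS b)).
have := gram_lb iJ dJ; apply: le_trans.
rewrite hE; case: (hdet _ I J) => hd.
  by move: dJ; rewrite hE; rewrite /subdet in hd; rewrite hd eqxx.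
rewrite /subdet in hd.
have -> : 1 / P ^+ 2 = (1 / P) ^+ 2 by rewrite expr_div_n expr1n.
rewrite -(real_normK (num_real (\det (mxsub I J A)))) !expr2.
by apply: ler_pM => //; rewrite divr_ge0 // ltW.
Qed.

Lemma UB (R : realType) r n (A : 'M[R]_(r, n)) (P : R) S k (I : 'I_k -> 'I_r) :
  (k <= r)%N -> (forall i j, `|A i j| <= P) -> 1 <= n%:R * P ^+ 2 ->
  \det (rowsub I (zero_cols A S) *m (rowsub I (zero_cols A S))^T)
    <= (r`!)%:R * (n%:R * P ^+ 2) ^+ r.
Proof.
move=> kr hA m1.
apply: le_trans (ler_norm _) _.
apply: le_trans (det_ub (m := n%:R * P ^+ 2) _) _.
  move=> a b; rewrite !mxE.
  apply: le_trans (ler_norm_sum _ _ _) _.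
  have -> : n%:R * P ^+ 2 = \sum_(i < n) P ^+ 2 by rewrite sumr_const card_ord mulr_natl.
  apply: ler_sum => j _; rewrite !mxE normrM expr2.
  have P0 : 0 <= P by apply: le_trans (hA (I a) j).
  by case: ifP => _; rewrite ?normr0 ?mul0r ?mulr0 ?mulr_ge0 // ler_pM.
apply: ler_pM.
- by rewrite ler0n.
- by rewrite exprn_ge0 // (le_trans ler01).
- by rewrite ler_nat leq_fact.
- exact: ler_weXn2l.
Qed.

Lemma card_U1_le (T : finType) (j : T) (S : {set T}) : (#|j |: S| <= #|S| + 1)%N.
Proof. by rewrite cardsU1; case: (j \in S) => /=; lia. Qed.

Definition ratio (R : realType) r n (M : 'M[R]_(r, n)) (j : 'I_n) (v : 'cV_r) : R :=
  ((v^T *m col j M) 0 0) ^+ 2 / (((M^T *m v)^T *m (M^T *m v)) 0 0).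

Lemma main_ind (R : realType) r n (A : 'M[R]_(r, n)) (P s U : R) (N : nat) :
  0 < P -> 1 <= s ->
  (forall (k : nat) (f : 'I_k -> 'I_r) (g : 'I_k -> 'I_n),
        subdet A f g = 0 \/ 1 / P <= `|subdet A f g|) ->
  (forall S k (I : 'I_k -> 'I_r), (k <= r)%N ->
     \det (rowsub I (zero_cols A S) *m (rowsub I (zero_cols A S))^T) <= U) ->
  U * (1 - 1 / s) ^+ N < 1 / P ^+ 2 ->
  forall k S, (\rank (zero_cols A S) <= k)%N ->
  exists S' : {set 'I_n}, (#|S'| <= #|S| + k * N.+1)%N /\
     forall j, leverage_score (zero_cols A S') j <= 1 / s.
Proof.
move=> P0 s1 hdet hU hN.
have s0 : 0 < s by apply: lt_le_trans s1.
have is0 : 0 <= 1 / s by rewrite divr_ge0 // ltW.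
have q0 : 0 <= 1 - 1 / s by rewrite subr_ge0 ler_pdivrMr // mul1r.
elim=> [|k IHk] S hr.
  exists S; split; first by rewrite mul0n addn0.
  move=> j; apply: lev_le => // v.
  have : zero_cols A S = 0 by apply/eqP; rewrite -mxrank_eq0 -leqn0.
  by move=> ->; rewrite trmx0 mul0mx eqxx.
set k' := \rank (zero_cols A S).
set I := maxrankfun (zero_cols A S).
have claim : forall m t, (t + m = N)%N -> forall S0,
    (\rank (zero_cols A S0) <= k')%N ->
    0 < \det (rowsub I (zero_cols A S0) *m (rowsub I (zero_cols A S0))^T) ->
    \det (rowsub I (zero_cols A S0) *m (rowsub I (zero_cols A S0))^T) <= U * (1 - 1/s) ^+ t ->
    exists S' : {set 'I_n}, (#|S'| <= #|S0| + m + 1 + k * N.+1)%N /\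
     forall j, leverage_score (zero_cols A S') j <= 1 / s.
  elim=> [|m IHm] t htm S0 hr0 dpos dle.
    rewrite addn0 in htm; subst t.
    have rf : row_free (rowsub I (zero_cols A S0)).
      by rewrite /row_free (rank_gram_unit dpos).
    have := LB P0 hdet rf.
    by move=> h; have := lt_le_trans (le_lt_trans dle hN) h; rewrite ltxx.
  have [[j [v hv]]|nex] := pselect (exists j v, 1 / s < ratio (zero_cols A S0) j v).
    have hst := step hr0 dpos s0 hv.
    have [rf|nrf] := boolP (row_free (rowsub I (zero_cols A (j |: S0)))).
      have d'pos : 0 < \det (rowsub I (zero_cols A (j |: S0)) *m (rowsub I (zero_cols A (j |: S0)))^T).
        by apply: lt_le_trans (LB P0 hdet rf); rewrite divr_gt0 // exprn_gt0.
      have dle' : \det (rowsub I (zero_cols A (j |: S0)) *m (rowsub I (zero_cols A (j |: S0)))^T) <= U * (1 - 1/s) ^+ t.+1.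
        apply: le_trans hst _; rewrite exprSr mulrA.
        by apply: ler_wpM2r.
      have [S' [h1 h2]] := IHm t.+1 (etrans (addSnnS t m) htm) (j |: S0)
        (leq_trans (rank_zc A S0 j) hr0) d'pos dle'.
      exists S'; split => //; apply: leq_trans h1 _.
      rewrite !leq_add2r addnS -addSn leq_add2r -addn1; exact: card_U1_le.
    have hd := drop hr0 dpos nrf.
    have hk : (\rank (zero_cols A (j |: S0)) <= k)%N.
      by rewrite -ltnS; apply: leq_trans hd _.
    have [S' [h1 h2]] := IHk _ hk.
    exists S'; split => //; apply: leq_trans h1 _.
    rewrite leq_add2r; apply: leq_trans (card_U1_le j S0) _.
    by rewrite -addnA leq_add2l addn1 ltnS.
  exists S0; split; first by rewrite -!addnA leq_addr.
  move=> j; apply: lev_le => // v _; rewrite leNgt; apply/negP => h.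
  by apply: nex; exists j, v.
have rfI : row_free (rowsub I (zero_cols A S)) by apply: maxrowsub_free.
have dpos : 0 < \det (rowsub I (zero_cols A S) *m (rowsub I (zero_cols A S))^T).
  by apply: lt_le_trans (LB P0 hdet rfI); rewrite divr_gt0 // exprn_gt0.
have dle : \det (rowsub I (zero_cols A S) *m (rowsub I (zero_cols A S))^T) <= U * (1 - 1/s) ^+ 0.
  by rewrite expr0 mulr1; apply: hU; apply: rank_leq_row.
have [S' [h1 h2]] := claim N 0%N (add0n N) S (leqnn _) dpos dle.
exists S'; split => //; apply: leq_trans h1 _.
apply/eq_leq; rewrite mulSn; ring.
Qed.

Lemma ln2_ge (R : realType) : 1 / 2 <= ln (2 : R).
Proof.
have h := @le_ln1Dx R (- (1 / 2)).
have h2 : (-1 : R) < - (1 / 2) by lra.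
have := h h2.
have -> : 1 + - (1 / 2) = (2 : R)^-1 by field.
rewrite lnV ?posrE //; lra.
Qed.

Lemma fact_le_pow r : (r`! <= r ^ r)%N.
Proof.
elim: r => // r IH; rewrite factS expnS leq_mul2l; apply/orP; right.
apply: leq_trans IH _; case: r => // r; rewrite leq_exp2r //.
Qed.

Lemma q_pow_le (R : realType) (s : R) : 1 <= s ->
  (1 - 1 / s) ^+ (Num.truncn s).+1 <= 1 / 2.
Proof.
move=> s1; set c := (Num.truncn s).+1; set x := 1 / s.
have s0 : 0 < s by lra.
have x0 : 0 < x by rewrite divr_gt0.
have x1 : x <= 1 by rewrite ler_pdivrMr // mul1r.
have cs : s < c%:R by apply: truncnS_gt.
have cx : 1 <= c%:R * x.
  by rewrite /x mulrA mulr1 ler_pdivlMr // mul1r ltW.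
have bern : forall m : nat, 1 + m%:R * x <= (1 + x) ^+ m.
  elim=> [|m IH]; first by rewrite mul0r addr0 expr0.
  rewrite exprS -natr1.
  have key : (1 + x) * (1 + m%:R * x) <= (1 + x) * (1 + x) ^+ m.
    by rewrite ler_pM2l //; lra.
  apply: le_trans key.
  have : 0 <= m%:R * x * x.
    by apply: mulr_ge0; [apply: mulr_ge0 => //; apply: ltW | apply: ltW].
  lra.
have h1 : 2 <= (1 + x) ^+ c by apply: le_trans (bern c); lra.
have xx : 0 <= x * x by rewrite mulr_ge0 // ltW.
have h2 : (1 - x) ^+ c * (1 + x) ^+ c <= 1.
  rewrite -exprMn; apply: exprn_ile1; nra.
have q0 : 0 <= (1 - x) ^+ c by rewrite exprn_ge0 //; lra.
have h3 : (1 - x) ^+ c * 2 <= (1 - x) ^+ c * (1 + x) ^+ c by apply: ler_wpM2l.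
lra.
Qed.

Lemma Un_lt K r n : (0 < K)%N -> (0 < r)%N -> (0 < n)%N ->
  (r`! * (n * (K * r ^ K) ^ 2) ^ r * (K * r ^ K) ^ 2 <
   2 ^ (r * (K ^ 4 + (4 * K + 1) * (trunc_log 2 (n * r)).+1) + 1))%N.
Proof.
move=> K0 r0 n0.
set Pn := (K * r ^ K)%N; set tl := trunc_log 2 (n * r).
have Pn0 : (0 < Pn)%N by rewrite /Pn muln_gt0 K0 expn_gt0 r0.
have h1 : (r`! * (n * Pn ^ 2) ^ r * Pn ^ 2 <= (r * n * Pn ^ 4) ^ r)%N.
  have -> : ((r * n * Pn ^ 4) ^ r = r ^ r * (n * Pn ^ 2) ^ r * (Pn ^ 2) ^ r)%N.
    clear Pn0; move: Pn => X; have -> : (r * n * X ^ 4 = r * (n * X ^ 2) * X ^ 2)%N by ring.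
    by rewrite !expnMn.
  apply: leq_mul; first apply: leq_mul.
  - exact: fact_le_pow.
  - by [].
  - by rewrite -{1}(expn1 (Pn ^ 2)); apply: leq_pexp2l; rewrite ?expn_gt0 ?Pn0.
have h2 : (r * n * Pn ^ 4 <= K ^ 4 * (n * r) ^ (4 * K + 1))%N.
  have -> : (r * n * Pn ^ 4 = K ^ 4 * (n * r ^ (4 * K + 1)))%N.
    rewrite /Pn expnMn -expnM expnD expn1 [(K * 4)%N]mulnC; move: (r ^ (4 * K))%N => Y; ring.
  rewrite leq_mul2l expnMn; apply/orP; right; apply: leq_mul => //.
  by rewrite -{1}(expn1 n); apply: leq_pexp2l; rewrite // addn1.
have h3 : (K ^ 4 * (n * r) ^ (4 * K + 1) < 2 ^ (K ^ 4 + (4 * K + 1) * tl.+1))%N.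
  rewrite [in X in (_ < X)%N]expnD; apply: ltn_mul; first exact: ltn_expl.
  rewrite [in X in (_ < X)%N]mulnC expnM ltn_exp2r ?addn1 //; exact: trunc_log_ltn.
have h4 := leq_ltn_trans h2 h3.
apply: leq_ltn_trans h1 _.
set E := (K ^ 4 + (4 * K + 1) * tl.+1)%N.
apply: (@leq_ltn_trans ((2 ^ E) ^ r)).
  by rewrite leq_exp2r // ltnW.
rewrite -expnM (mulnC E r) expnD expn1.
by apply: ltn_Pmulr; rewrite // expn_gt0.
Qed.

Lemma final_bound (R : realType) K r n (s : R) : (0 < K)%N -> (0 < r)%N -> (0 < n)%N -> 1 <= s ->
  ((r * ((Num.truncn s).+1 * (r * (K ^ 4 + (4 * K + 1) * (trunc_log 2 (n * r)).+1) + 1)).+1)%N)%:R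
  <= (4 * K ^ 4 + 16 * K + 7)%N%:R * r%:R ^+ 2 * s * (1 + ln (n%:R * r%:R)).
Proof.
move=> K0 r0 n0 s1.
set L := ln (n%:R * r%:R : R).
set tl := trunc_log 2 (n * r).
have nr1 : (1 : R) <= n%:R * r%:R by rewrite -natrM ler1n muln_gt0 n0 r0.
have L0 : 0 <= L by apply: ln_ge0.
have tlL : tl%:R <= 2 * L.
  have nr0 : (0 < n * r)%N by rewrite muln_gt0 n0 r0.
  have h := trunc_logP (isT : (1 < 2)%N) nr0.
  have h' : (2 : R) ^+ tl <= n%:R * r%:R by rewrite -natrM -natrX ler_nat.
  have h'' : ln ((2 : R) ^+ tl) <= L.
    by rewrite ler_ln // posrE ?exprn_gt0 // (lt_le_trans ltr01).
  have e : ln ((2:R) ^+ tl) = tl%:R * ln 2 by rewrite lnXn // mulr_natl.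
  have : tl%:R * (1 / 2) <= tl%:R * ln (2 : R) by apply: ler_wpM2l; rewrite ?ler0n ?ln2_ge.
  move: h''; rewrite e; lra.
have cs : ((Num.truncn s).+1)%:R <= s + 1.
  by rewrite -natr1 lerD2r truncn_le; lra.
set c := (Num.truncn s).+1 in cs *.
have E : ((r * (c * (r * (K ^ 4 + (4 * K + 1) * tl.+1) + 1)).+1)%N)%:R =
  r%:R * (c%:R * (r%:R * (K%:R ^+ 4 + (4 * K%:R + 1) * (tl%:R + 1)) + 1) + 1) :> R.
  rewrite natrM -natr1 natrM natrD natrM natrD natrX natrM -natr1 natrD.
  by rewrite natrM.
have EC : (4 * K ^ 4 + 16 * K + 7)%N%:R = 4 * K%:R ^+ 4 + 16 * K%:R + 7 :> R.
  by rewrite !natrD !natrM; ring.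
rewrite E EC.
set x := r%:R; set k := K%:R; set t := tl%:R; set cc := c%:R.
have x1 : (1 : R) <= x by rewrite /x ler1n.
have k1 : (1 : R) <= k by rewrite /k ler1n.
have a1 : (1 : R) <= k ^+ 4 by apply: exprn_ege1.
have t0 : (0 : R) <= t by rewrite /t ler0n.
have cc0 : (0 : R) <= cc by rewrite /cc ler0n.
set a := k ^+ 4 in a1 *.
set W := x * (1 + L).
have W1 : 1 <= W by rewrite /W; nra.
have hT : x * (a + (4 * k + 1) * (t + 1)) + 1 <= W * (2 * a + 8 * k + 3).
  have h : a + (4 * k + 1) * (t + 1) <= (a + 4 * k + 1) * (2 * (1 + L)) by nra.
  have : x * (a + (4 * k + 1) * (t + 1)) <= x * ((a + 4 * k + 1) * (2 * (1 + L))).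
    by rewrite ler_pM2l //; lra.
  rewrite /W; nra.
set T := x * (a + (4 * k + 1) * (t + 1)) + 1 in hT *.
have T0 : 0 <= T.
  rewrite /T; apply: addr_ge0 => //; apply: mulr_ge0; first lra.
  apply: addr_ge0; first lra.
  apply: mulr_ge0; lra.
have h2 : cc * T + 1 <= s * W * (4 * a + 16 * k + 7).
  have : cc * T <= (2 * s) * (W * (2 * a + 8 * k + 3)).
    apply: ler_pM => //; lra.
  nra.
have : x * (cc * T + 1) <= x * (s * W * (4 * a + 16 * k + 7)).
  by rewrite ler_pM2l //; lra.
move=> h; apply: le_trans h _; rewrite /W.
rewrite le_eqVlt; apply/orP; left; apply/eqP; ring.
Qed.

Theorem mainTheorem14 :
  forall K : nat, exists C : nat,
  forall (R : realType) (r n : nat) (A : 'M[R]_(r, n)) (s : R),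
    (1 <= r)%N ->
    (forall i j, A i j != 0 -> `|A i j| <= K%:R * r%:R ^+ K) ->
    (forall (k : nat) (f : 'I_k -> 'I_r) (g : 'I_k -> 'I_n),
        subdet A f g = 0 \/ 1 / (K%:R * r%:R ^+ K) <= `|subdet A f g|) ->
    1 <= s ->
    exists S : {set 'I_n},
      (#|S|%:R <= C%:R * r%:R ^+ 2 * s * (1 + ln (n%:R * r%:R))) /\
      (forall j : 'I_n, leverage_score (zero_cols A S) j <= 1 / s).
Proof.
move=> K; exists (4 * K ^ 4 + 16 * K + 7)%N.
move=> R r n A s hr hA hdet hs.
have s0 : 0 < s by apply: lt_le_trans hs.
have Ln0 : 0 <= ln (n%:R * r%:R : R).
  case: n A hA hdet => [|n] A hA hdet; first by rewrite mul0r ln0.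
  by apply: ln_ge0; rewrite -natrM ler1n muln_gt0.
have RHS0 : 0 <= (4 * K ^ 4 + 16 * K + 7)%N%:R * r%:R ^+ 2 * s * (1 + ln (n%:R * r%:R : R)).
  by rewrite !mulr_ge0 ?ler0n ?exprn_ge0 // ?(ltW s0) //; lra.
case: (posnP n) => [n0|n0].
  exists (finset.set0 : {set 'I_n}); split; first by rewrite cards0.
  by move=> j; have := ltn_ord j; rewrite {2}n0.
case: (posnP K) => [K0|K0].
  have A0 : forall i j, A i j = 0.
    move=> i j; apply/eqP; apply/negP => /negP h; have := hA i j h.
    by rewrite K0 mul0r normr_le0 => /eqP; apply/eqP.
  exists (finset.set0 : {set 'I_n}); split; first by rewrite cards0.
  move=> j; apply: lev_le; first by rewrite divr_ge0 // ltW.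
  move=> v; have -> : zero_cols A (finset.set0 : {set 'I_n}) = 0.
    by apply/matrixP => a b; rewrite !mxE A0; case: ifP.
  by rewrite trmx0 mul0mx eqxx.
pose P : R := K%:R * r%:R ^+ K.
have P1 : 1 <= P.
  have k1 : (1:R) <= K%:R by rewrite ler1n.
  have r1 : (1:R) <= r%:R ^+ K by rewrite exprn_ege1 // ler1n.
  rewrite /P; nra.
have P0 : 0 < P by apply: lt_le_trans P1.
have hA' : forall i j, `|A i j| <= P.
  move=> i j; case: (eqVneq (A i j) 0) => [->|h]; last exact: hA.
  by rewrite normr0 ltW.
pose c := (Num.truncn s).+1.
pose T := (r * (K ^ 4 + (4 * K + 1) * (trunc_log 2 (n * r)).+1) + 1)%N.
pose U : R := (r`!)%:R * (n%:R * P ^+ 2) ^+ r.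
have nP1 : 1 <= n%:R * P ^+ 2.
  have n1 : (1:R) <= n%:R by rewrite ler1n.
  have p2 : (1:R) <= P ^+ 2 by rewrite exprn_ege1.
  nra.
have hU : forall S k (I : 'I_k -> 'I_r), (k <= r)%N ->
     \det (rowsub I (zero_cols A S) *m (rowsub I (zero_cols A S))^T) <= U.
  by move=> S k I kr; apply: UB.
have hN : U * (1 - 1 / s) ^+ (c * T) < 1 / P ^+ 2.
  have q0 : 0 <= 1 - 1 / s by rewrite subr_ge0 ler_pdivrMr // mul1r.
  have hq : (1 - 1 / s) ^+ (c * T) <= (1 / 2) ^+ T.
    rewrite exprM; apply: lerXn2r; rewrite ?nnegrE ?exprn_ge0 //.
    by rewrite divr_ge0. exact: q_pow_le.
  have U0 : 0 <= U by rewrite /U mulr_ge0 ?ler0n // exprn_ge0 // (le_trans ler01).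
  apply: le_lt_trans (ler_wpM2l U0 hq) _.
  have P20 : 0 < P ^+ 2 by rewrite exprn_gt0.
  rewrite ltr_pdivlMr // expr_div_n expr1n.
  rewrite mulrAC mulrA mulr1 ltr_pdivrMr ?exprn_gt0 // mul1r.
  have -> : U * P ^+ 2 = (r`! * (n * (K * r ^ K) ^ 2) ^ r * (K * r ^ K) ^ 2)%N%:R.
    by rewrite /U /P !(natrM, natrX) expr2.
  rewrite -natrX ltr_nat; exact: Un_lt.
have [S' [h1 h2]] := main_ind P0 hs hdet hU hN (rank_leq_row (zero_cols A (finset.set0 : {set 'I_n}))).
exists S'; split => //.
apply: le_trans _ (final_bound K0 hr n0 hs).
by rewrite ler_nat; rewrite cards0 add0n in h1.
Qed.
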